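(* Let $\sigma,b$ and $x$ be as in the context. There exist $C\in\mathcal{C}$ and $\delta^*\in1/\mathcal{C}$ such that for all $\delta\le\delta^*$ and all $\xi\in\mathbb{R}^2$, \[ \frac1C|\xi|_{A_\delta(x)}\le|\xi|_{\bar A_\delta(x)}\le C|\xi|_{A_\delta(x)}\quad\text{and}\quad\frac1C|\xi|_{A_\delta(x)}\le|\xi|_{A_\delta(\hat x)}\le C|\xi|_{A_\delta(x)}, \] where $\hat x=x+\delta b(x)$.
   Context: $\sigma,b:\mathbb{R}^2\to\mathbb{R}^2$ are $C^3$; $\partial_gf=\sum_ig^i\partial_{x_i}f$, $[f,g]=\partial_gf-\partial_fg$. $A_\delta(y)$ is the matrix with columns $\delta^{1/2}\sigma(y),\delta^{3/2}[b,\sigma](y)$; $\bar A_\delta(x)$ has columns $\delta^{1/2}(\sigma(x)+\delta\partial_b\sigma(x))$, $\delta^{3/2}[b,\sigma](x)$; for an invertible $2\times2$ matrix $M$, $|\xi|_M=|M^{-1}\xi|$. $\lambda(y)$ is the smallest eigenvalue of $A(y)A(y)^T$ where $A(y)$ has columns $\sigma(y),[b,\sigma](y)$; $n(y)=\sum_{k=0}^3\sum_{|\alpha|=k}(|\partial^\alpha b(y)|+|\partial^\alpha\sigma(y)|)$. Local hypotheses: $\lambda(y)\ge\Lambda\in(0,1]$ and $n(y)\le N$ (with $N\ge1$) for $|y-x|<1$; there is a differentiable $\kappa_\sigma$ with $\partial_\sigma\sigma=\kappa_\sigma\sigma$, $|\kappa_\sigma|,|\nabla\kappa_\sigma|\le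 n$. $\mathcal{C}=\{K(N/\Lambda)^q:K,q\ge1\text{ universal}\}$, $1/\mathcal{C}=\{c:1/c\in\mathcal{C}\}$. *)

(* Defs.v *)
From Stdlib Require Import Reals List.
From Coquelicot Require Import Coquelicot.
Open Scope R_scope.

Definition pt := (R * R)%type.

Definition vadd (u v : pt) : pt := (fst u + fst v, snd u + snd v).
Definition vscal (a : R) (u : pt) : pt := (a * fst u, a * snd u).
Definition vnorm (u : pt) : R := sqrt (fst u ^ 2 + snd u ^ 2).
Definition vdist (u v : pt) : R := vnorm (fst u - fst v, snd u - snd v).

Definition d1 (f : pt -> R) : pt -> R :=
  fun p => Derive (fun t => f (t, snd p)) (fst p).
Definition d2 (f : pt -> R) : pt -> R :=
  fun p => Derive (fun t => f (fst p, t)) (snd p).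

(* Iterated partial derivative along a word of directions (true = x_1, false = x_2). *)
Fixpoint dword (w : list bool) (f : pt -> R) : pt -> R :=
  match w with
  | nil => f
  | d :: w' => (if d then d1 else d2) (dword w' f)
  end.

Definition C3f (f : pt -> R) : Prop :=
  (forall w : list bool, (length w <= 2)%nat -> forall p : pt,
      ex_derive (fun t => dword w f (t, snd p)) (fst p) /\
      ex_derive (fun t => dword w f (fst p, t)) (snd p)) /\
  (forall w : list bool, (length w <= 3)%nat -> forall p : pt,
      continuous (dword w f) p).

Definition C3 (g : pt -> pt) : Prop :=
  C3f (fun p => fst (g p)) /\ C3f (fun p => snd (g p)).

Definition dpart (a1 a2 : nat) (f : pt -> R) : pt -> R :=
  Nat.iter a1 d1 (Nat.iter a2 d2 f).
Definition dpartv (a1 a2 : nat) (g : pt -> pt) (y : pt) : pt :=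
  (dpart a1 a2 (fun p => fst (g p)) y, dpart a1 a2 (fun p => snd (g p)) y).

Definition dirder (g f : pt -> pt) (y : pt) : pt :=
  vadd (vscal (fst (g y)) (dpartv 1 0 f y)) (vscal (snd (g y)) (dpartv 0 1 f y)).

Definition bracket (f g : pt -> pt) (y : pt) : pt :=
  vadd (dirder g f y) (vscal (-1) (dirder f g y)).

(* 2x2 real matrices, given by their two columns. *)
Definition mat2 := (pt * pt)%type.
Definition mdet (M : mat2) : R :=
  fst (fst M) * snd (snd M) - fst (snd M) * snd (fst M).
Definition minvertible (M : mat2) : Prop := mdet M <> 0.
Definition minv_apply (M : mat2) (xi : pt) : pt :=
  let a := fst M in let c := snd M in
  (/ mdet M * (snd c * fst xi - fst c * snd xi),
   / mdet M * (- snd a * fst xi + fst a * snd xi)).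
Definition mnorm (M : mat2) (xi : pt) : R := vnorm (minv_apply M xi).

(* M M^T, as a symmetric matrix with entries (m11, m12, m22). *)
Definition gram (M : mat2) : R * R * R :=
  let a := fst M in let c := snd M in
  (fst a ^ 2 + fst c ^ 2, fst a * snd a + fst c * snd c, snd a ^ 2 + snd c ^ 2).
Definition is_eigenvalue_sym (S : R * R * R) (mu : R) : Prop :=
  let '(m11, m12, m22) := S in (m11 - mu) * (m22 - mu) - m12 * m12 = 0.
Definition min_eig_ge (M : mat2) (L : R) : Prop :=
  forall mu, is_eigenvalue_sym (gram M) mu -> L <= mu.

Definition Amat (sigma b : pt -> pt) (y : pt) : mat2 := (sigma y, bracket b sigma y).
Definition Adelta (sigma b : pt -> pt) (delta : R) (y : pt) : mat2 :=
  (vscal (sqrt delta) (sigma y), vscal (delta * sqrt delta) (bracket b sigma y)).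
Definition Abar (sigma b : pt -> pt) (delta : R) (x : pt) : mat2 :=
  (vscal (sqrt delta) (vadd (sigma x) (vscal delta (dirder b sigma x))),
   vscal (delta * sqrt delta) (bracket b sigma x)).

Definition nfun (sigma b : pt -> pt) (y : pt) : R :=
  sum_f_R0 (fun k =>
    sum_f_R0 (fun i => vnorm (dpartv i (k - i) b y) + vnorm (dpartv i (k - i) sigma y)) k) 3.

Definition grad (f : pt -> R) (y : pt) : pt := (d1 f y, d2 f y).

(* Main.v *)
Require Import Defs.
From Stdlib Require Import Reals List Lra Psatz.
From Coquelicot Require Import Coquelicot.
Open Scope R_scope.

Lemma vnorm_ge0 u : 0 <= vnorm u.
Proof. unfold vnorm; apply sqrt_pos. Qed.

Lemma abs_le_vnorm1 u : Rabs (fst u) <= vnorm u.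
Proof.
  unfold vnorm. rewrite <- sqrt_Rsqr_abs. apply sqrt_le_1_alt.
  unfold Rsqr. simpl. nra.
Qed.

Lemma abs_le_vnorm2 u : Rabs (snd u) <= vnorm u.
Proof.
  unfold vnorm. rewrite <- sqrt_Rsqr_abs. apply sqrt_le_1_alt.
  unfold Rsqr. simpl. nra.
Qed.

Lemma vnorm_le_abs a b : vnorm (a, b) <= Rabs a + Rabs b.
Proof.
  unfold vnorm; simpl.
  rewrite <- (sqrt_Rsqr (Rabs a + Rabs b)).
  2: { pose proof (Rabs_pos a); pose proof (Rabs_pos b); lra. }
  apply sqrt_le_1_alt. unfold Rsqr.
  pose proof (Rabs_pos a); pose proof (Rabs_pos b).
  replace (a*(a*1)) with (Rabs a * Rabs a) by (rewrite <- Rabs_mult; rewrite Rabs_right; [ring| nra]).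
  replace (b*(b*1)) with (Rabs b * Rabs b) by (rewrite <- Rabs_mult; rewrite Rabs_right; [ring| nra]).
  nra.
Qed.

Lemma abs_det2 x y z w X Y Z W :
  Rabs x <= X -> Rabs y <= Y -> Rabs z <= Z -> Rabs w <= W ->
  Rabs (x*y - z*w) <= X*Y + Z*W.
Proof.
  intros. unfold Rminus. eapply Rle_trans. apply Rabs_triang.
  rewrite Rabs_Ropp, !Rabs_mult.
  pose proof (Rabs_pos x); pose proof (Rabs_pos y); pose proof (Rabs_pos z); pose proof (Rabs_pos w).
  apply Rplus_le_compat; apply Rmult_le_compat; auto.
Qed.

Lemma abs_div_le X d M L : Rabs X <= M -> 0 < L -> L <= Rabs d -> Rabs (X / d) <= M / L.
Proof.
  intros. unfold Rdiv. rewrite Rabs_mult, Rabs_inv.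
  apply Rmult_le_compat; auto using Rabs_pos.
  left; apply Rinv_0_lt_compat. lra.
  apply Rinv_le_contravar; lra.
Qed.

Lemma mnorm_compare (B Bp : mat2) S xi :
  mdet B <> 0 -> mdet Bp <> 0 ->
  Rabs (fst (minv_apply Bp (fst B))) + Rabs (snd (minv_apply Bp (fst B)))
  + Rabs (fst (minv_apply Bp (snd B))) + Rabs (snd (minv_apply Bp (snd B))) <= S ->
  mnorm Bp xi <= S * mnorm B xi.
Proof.
  intros HB HBp HS.
  set (eta := minv_apply B xi).
  assert (E : minv_apply Bp xi =
    (fst eta * fst (minv_apply Bp (fst B)) + snd eta * fst (minv_apply Bp (snd B)),
     fst eta * snd (minv_apply Bp (fst B)) + snd eta * snd (minv_apply Bp (snd B)))).
  { subst eta. destruct B as [[a1 a2] [c1 c2]]; destruct Bp as [[p1 p2] [q1 q2]];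
    destruct xi as [x1 x2]. unfold mdet, minv_apply in *; simpl in *.
    unfold mdet; simpl; f_equal; field; auto. }
  unfold mnorm. rewrite E. fold eta.
  pose proof (abs_le_vnorm1 eta); pose proof (abs_le_vnorm2 eta).
  eapply Rle_trans. apply vnorm_le_abs.
  set (r11 := fst (minv_apply Bp (fst B))) in *.
  set (r12 := snd (minv_apply Bp (fst B))) in *.
  set (r21 := fst (minv_apply Bp (snd B))) in *.
  set (r22 := snd (minv_apply Bp (snd B))) in *.
  set (n := vnorm eta) in *.
  assert (H1 : Rabs (fst eta * r11 + snd eta * r21) <= n * (Rabs r11 + Rabs r21)).
  { eapply Rle_trans. apply Rabs_triang. rewrite !Rabs_mult.
    pose proof (Rabs_pos r11); pose proof (Rabs_pos r21);
    pose proof (Rabs_pos (fst eta)); pose proof (Rabs_pos (snd eta)). nra. }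
  assert (H2 : Rabs (fst eta * r12 + snd eta * r22) <= n * (Rabs r12 + Rabs r22)).
  { eapply Rle_trans. apply Rabs_triang. rewrite !Rabs_mult.
    pose proof (Rabs_pos r12); pose proof (Rabs_pos r22);
    pose proof (Rabs_pos (fst eta)); pose proof (Rabs_pos (snd eta)). nra. }
  assert (0 <= n) by apply vnorm_ge0.
  nra.
Qed.

Lemma det_lower M L : 0 < L -> min_eig_ge M L -> L <= Rabs (mdet M).
Proof.
  intros HL H. destruct M as [[a1 a2] [c1 c2]]. unfold min_eig_ge, gram, is_eigenvalue_sym, mdet in *.
  cbn [fst snd] in *.
  set (m11 := a1^2 + c1^2) in *. set (m12 := a1*a2 + c1*c2) in *. set (m22 := a2^2+c2^2) in *.
  set (Dq := (m11 - m22)^2 + 4*m12^2).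
  assert (HDq : 0 <= Dq) by (unfold Dq; pose proof (pow2_ge_0 (m11-m22)); pose proof (pow2_ge_0 m12); lra).
  set (D := sqrt Dq).
  assert (HD : D * D = Dq) by (apply sqrt_sqrt; auto).
  assert (HD0 : 0 <= D) by apply sqrt_pos.
  assert (Hm : L <= (m11 + m22 - D)/2).
  { apply H. transitivity ((D*D - Dq)/4). unfold Dq; field. rewrite HD; field. }
  assert (Hp : L <= (m11 + m22 + D)/2).
  { apply H. transitivity ((D*D - Dq)/4). unfold Dq; field. rewrite HD; field. }
  assert (Hprod : ((m11 + m22 - D)/2) * ((m11 + m22 + D)/2) = (a1*c2 - c1*a2)^2).
  { replace (((m11 + m22 - D)/2) * ((m11 + m22 + D)/2)) with (((m11+m22)^2 - D*D)/4) by field.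
    rewrite HD. unfold Dq, m11, m12, m22. field. }
  assert (L*L <= (a1*c2 - c1*a2)^2) by nra.
  destruct (Rcase_abs (a1*c2 - c1*a2)) as [Hn|Hn];
    [rewrite Rabs_left by lra | rewrite Rabs_right by lra]; nra.
Qed.

Lemma gen_dir a P Q Rr L s1 s2 c1 c2 t1 t2 e1 e2 :
  0 < a -> a*a <= 1 -> 0 < L ->
  Rabs s1 <= P -> Rabs s2 <= P -> Rabs t1 <= P -> Rabs t2 <= P ->
  Rabs c1 <= Q -> Rabs c2 <= Q -> Rabs e1 <= Q -> Rabs e2 <= Q ->
  Rabs (s1 - t1) <= Rr * (a*a) -> Rabs (s2 - t2) <= Rr * (a*a) ->
  L <= Rabs (s1*c2 - c1*s2) -> L <= Rabs (t1*e2 - e1*t2) ->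
  forall xi,
  mnorm ((a*t1, a*t2), ((a*a)*a*e1, (a*a)*a*e2)) xi <=
   ((4*P*Q + 2*P*Rr + 2*Q*Q)/L) * mnorm ((a*s1, a*s2), ((a*a)*a*c1, (a*a)*a*c2)) xi.
Proof.
  intros Ha Ha1 HL Hs1 Hs2 Ht1 Ht2 Hc1 Hc2 He1 He2 Hd1 Hd2 Hd Hd' xi.
  assert (Hdn : s1*c2 - c1*s2 <> 0).
  { intro E; rewrite E, Rabs_R0 in Hd; lra. }
  assert (Hdn' : t1*e2 - e1*t2 <> 0).
  { intro E; rewrite E, Rabs_R0 in Hd'; lra. }
  assert (Ha0 : a <> 0) by lra.
  apply mnorm_compare.
  - unfold mdet; simpl. intro E. apply Hdn.
    apply (Rmult_eq_reg_l (a*a*a*a)). rewrite Rmult_0_r, <- E. ring.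
    repeat apply Rmult_integral_contrapositive_currified; auto.
  - unfold mdet; simpl. intro E. apply Hdn'.
    apply (Rmult_eq_reg_l (a*a*a*a)). rewrite Rmult_0_r, <- E. ring.
    repeat apply Rmult_integral_contrapositive_currified; auto.
  - unfold minv_apply, mdet; simpl.
    assert (Hden : a * t1 * (a * a * a * e2) - a * a * a * e1 * (a * t2) <> 0).
    { replace (a * t1 * (a * a * a * e2) - a * a * a * e1 * (a * t2)) with ((a*a*a*a)*(t1*e2 - e1*t2)) by ring.
      repeat apply Rmult_integral_contrapositive_currified; auto. }
    set (d := t1*e2 - e1*t2).
    replace (/ (a * t1 * (a * a * a * e2) - a * a * a * e1 * (a * t2)) *
      (a * a * a * e2 * (a * s1) - a * a * a * e1 * (a * s2))) with
      ((e2*s1 - e1*s2)/d) by (unfold d; field; repeat split; auto).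
    replace (/ (a * t1 * (a * a * a * e2) - a * a * a * e1 * (a * t2)) *
      (- (a * t2) * (a * s1) + a * t1 * (a * s2))) with
      (((t1*(s2-t2) - t2*(s1-t1))/(a*a))/d) by (unfold d; field; repeat split; auto).
    replace (/ (a * t1 * (a * a * a * e2) - a * a * a * e1 * (a * t2)) *
      (a * a * a * e2 * (a * a * a * c1) - a * a * a * e1 * (a * a * a * c2))) with
      (((a*a)*(e2*c1 - e1*c2))/d) by (unfold d; field; repeat split; auto).
    replace (/ (a * t1 * (a * a * a * e2) - a * a * a * e1 * (a * t2)) *
      (- (a * t2) * (a * a * a * c1) + a * t1 * (a * a * a * c2))) with
      ((t1*c2 - t2*c1)/d) by (unfold d; field; repeat split; auto).
    assert (B1 : Rabs ((e2*s1 - e1*s2)/d) <= (Q*P + Q*P)/L).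
    { apply abs_div_le; auto. apply abs_det2; auto. }
    assert (B2 : Rabs (((t1*(s2-t2) - t2*(s1-t1))/(a*a))/d) <= (P*Rr + P*Rr)/L).
    { apply abs_div_le; auto.
      assert (Rabs (t1*(s2-t2) - t2*(s1-t1)) <= P * (Rr*(a*a)) + P*(Rr*(a*a))) by (apply abs_det2; auto).
      unfold Rdiv. rewrite Rabs_mult, Rabs_inv, (Rabs_right (a*a)) by nra.
      apply (Rmult_le_reg_r (a*a)). nra.
      rewrite Rmult_assoc, Rinv_l by nra. nra. }
    assert (B3 : Rabs (((a*a)*(e2*c1 - e1*c2))/d) <= (Q*Q+Q*Q)/L).
    { apply abs_div_le; auto. rewrite Rabs_mult, (Rabs_right (a*a)) by nra.
      assert (Rabs (e2*c1 - e1*c2) <= Q*Q+Q*Q) by (apply abs_det2; auto).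
      assert (0 <= Rabs (e2*c1 - e1*c2)) by apply Rabs_pos. nra. }
    assert (B4 : Rabs ((t1*c2 - t2*c1)/d) <= (P*Q+P*Q)/L).
    { apply abs_div_le; auto. apply abs_det2; auto. }
    replace ((4*P*Q + 2*P*Rr + 2*Q*Q)/L) with
      ((Q*P + Q*P)/L + (P*Rr + P*Rr)/L + (Q*Q+Q*Q)/L + (P*Q+P*Q)/L) by (field; lra).
    lra.
Qed.

Lemma mvt1 (g : R -> R) a h M :
  (forall t, Rmin a (a+h) <= t <= Rmax a (a+h) -> ex_derive g t /\ Rabs (Derive g t) <= M) ->
  Rabs (g (a+h) - g a) <= M * Rabs h.
Proof.
  intros H.
  destruct (MVT_gen g a (a+h) (Derive g)) as [c [Hc E]].
  - intros t Ht. apply Derive_correct. apply H. lra.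
  - intros t Ht. apply (proj2 (continuity_pt_filterlim _ _)). apply (ex_derive_continuous g). apply H. lra.
  - rewrite E. rewrite Rabs_mult. replace (a + h - a) with h by ring.
    apply Rmult_le_compat_r. apply Rabs_pos. apply H. lra.
Qed.

Lemma between_abs a h t : Rmin a (a+h) <= t <= Rmax a (a+h) -> Rabs (t - a) <= Rabs h.
Proof.
  intros [H1 H2]. unfold Rmin, Rmax in *.
  destruct (Rle_dec a (a+h)); unfold Rabs; repeat destruct Rcase_abs; lra.
Qed.

Lemma mvt2 (f : pt -> R) x1 x2 h1 h2 M :
  (forall p : pt, ex_derive (fun t => f (t, snd p)) (fst p) /\ ex_derive (fun t => f (fst p, t)) (snd p)) ->
  (forall p : pt, Rabs (fst p - x1) + Rabs (snd p - x2) <= Rabs h1 + Rabs h2 ->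
      Rabs (Defs.d1 f p) <= M /\ Rabs (Defs.d2 f p) <= M) ->
  Rabs (f (x1+h1, x2+h2) - f (x1, x2)) <= M * (Rabs h1 + Rabs h2).
Proof.
  intros Hd Hb.
  assert (S1 : Rabs (f (x1+h1, x2+h2) - f (x1, x2+h2)) <= M * Rabs h1).
  { apply (mvt1 (fun t => f (t, x2+h2)) x1 h1 M).
    intros t Ht. split.
    - apply (Hd (t, x2+h2)).
    - assert (Hp := Hb (t, x2+h2)). simpl in Hp.
      replace (x2 + h2 - x2) with h2 in Hp by ring.
      pose proof (between_abs _ _ _ Ht). apply Hp. lra. }
  assert (S2 : Rabs (f (x1, x2+h2) - f (x1, x2)) <= M * Rabs h2).
  { apply (mvt1 (fun t => f (x1, t)) x2 h2 M).
    intros t Ht. split.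
    - apply (Hd (x1, t)).
    - assert (Hp := Hb (x1, t)). simpl in Hp.
      replace (x1 - x1) with 0 in Hp by ring. rewrite Rabs_R0 in Hp.
      pose proof (between_abs _ _ _ Ht). pose proof (Rabs_pos h1). apply Hp. lra. }
  replace (f (x1+h1, x2+h2) - f (x1, x2)) with
    ((f (x1+h1, x2+h2) - f (x1, x2+h2)) + (f (x1, x2+h2) - f (x1, x2))) by ring.
  eapply Rle_trans. apply Rabs_triang. lra.
Qed.

Lemma nfun_ge sigma b y :
  vnorm (dpartv 0 0 b y) + vnorm (dpartv 0 0 sigma y)
  + vnorm (dpartv 1 0 b y) + vnorm (dpartv 0 1 b y)
  + vnorm (dpartv 1 0 sigma y) + vnorm (dpartv 0 1 sigma y) <= nfun sigma b y.
Proof.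
  unfold nfun. cbn [sum_f_R0 Nat.sub].
  repeat match goal with |- context [vnorm ?u] =>
    let H := fresh in pose proof (vnorm_ge0 u) as H; revert H; generalize (vnorm u); intros ? ? end.
  lra.
Qed.

Lemma comp_bounds sigma b y N : nfun sigma b y <= N ->
  Rabs (fst (sigma y)) <= N /\ Rabs (snd (sigma y)) <= N /\
  Rabs (fst (b y)) <= N /\ Rabs (snd (b y)) <= N /\
  Rabs (Defs.d1 (fun p => fst (sigma p)) y) <= N /\ Rabs (Defs.d1 (fun p => snd (sigma p)) y) <= N /\
  Rabs (Defs.d2 (fun p => fst (sigma p)) y) <= N /\ Rabs (Defs.d2 (fun p => snd (sigma p)) y) <= N /\
  Rabs (Defs.d1 (fun p => fst (b p)) y) <= N /\ Rabs (Defs.d1 (fun p => snd (b p)) y) <= N /\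
  Rabs (Defs.d2 (fun p => fst (b p)) y) <= N /\ Rabs (Defs.d2 (fun p => snd (b p)) y) <= N.
Proof.
  intros H. pose proof (nfun_ge sigma b y) as G.
  pose proof (vnorm_ge0 (dpartv 0 0 b y)). pose proof (vnorm_ge0 (dpartv 0 0 sigma y)).
  pose proof (vnorm_ge0 (dpartv 1 0 b y)). pose proof (vnorm_ge0 (dpartv 0 1 b y)).
  pose proof (vnorm_ge0 (dpartv 1 0 sigma y)). pose proof (vnorm_ge0 (dpartv 0 1 sigma y)).
  pose proof (abs_le_vnorm1 (dpartv 0 0 b y)). pose proof (abs_le_vnorm2 (dpartv 0 0 b y)).
  pose proof (abs_le_vnorm1 (dpartv 0 0 sigma y)). pose proof (abs_le_vnorm2 (dpartv 0 0 sigma y)).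
  pose proof (abs_le_vnorm1 (dpartv 1 0 b y)). pose proof (abs_le_vnorm2 (dpartv 1 0 b y)).
  pose proof (abs_le_vnorm1 (dpartv 0 1 b y)). pose proof (abs_le_vnorm2 (dpartv 0 1 b y)).
  pose proof (abs_le_vnorm1 (dpartv 1 0 sigma y)). pose proof (abs_le_vnorm2 (dpartv 1 0 sigma y)).
  pose proof (abs_le_vnorm1 (dpartv 0 1 sigma y)). pose proof (abs_le_vnorm2 (dpartv 0 1 sigma y)).
  unfold dpartv, dpart in *. cbn [fst snd Nat.iter nat_rect] in *.
  repeat split; lra.
Qed.

Lemma abs2 p1 q1 p2 q2 N : Rabs p1 <= N -> Rabs q1 <= N -> Rabs p2 <= N -> Rabs q2 <= N ->
  Rabs (p1*q1 + p2*q2) <= 2*(N*N).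
Proof.
  intros. eapply Rle_trans. apply Rabs_triang. rewrite !Rabs_mult.
  assert (Rabs p1 * Rabs q1 <= N*N) by (apply Rmult_le_compat; auto using Rabs_pos).
  assert (Rabs p2 * Rabs q2 <= N*N) by (apply Rmult_le_compat; auto using Rabs_pos).
  lra.
Qed.

Lemma abs_sub2 X Y M : Rabs X <= M -> Rabs Y <= M -> Rabs (X + -1 * Y) <= 2*M.
Proof.
  intros. eapply Rle_trans. apply Rabs_triang. rewrite Rabs_mult.
  rewrite (Rabs_left (-1)) by lra. lra.
Qed.

Lemma bracket_bounds sigma b y N : nfun sigma b y <= N ->
  Rabs (fst (bracket b sigma y)) <= 2*(2*(N*N)) /\ Rabs (snd (bracket b sigma y)) <= 2*(2*(N*N)) /\
  Rabs (fst (dirder b sigma y)) <= 2*(N*N) /\ Rabs (snd (dirder b sigma y)) <= 2*(N*N).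
Proof.
  intros H. destruct (comp_bounds _ _ _ _ H) as (H1&H2&H3&H4&H5&H6&H7&H8&H9&H10&H11&H12).
  unfold bracket, dirder, vadd, vscal, dpartv, dpart. cbn [fst snd Nat.iter nat_rect].
  repeat split; try apply abs_sub2; apply abs2; auto.
Qed.

Lemma Lfacts N Lam : 1 <= N -> 0 < Lam <= 1 ->
  1 <= N/Lam /\ N <= (N/Lam)^5 /\ N^4/Lam <= (N/Lam)^5.
Proof.
  intros HN HLam. set (u := /Lam).
  assert (Hu : 1 <= u).
  { unfold u. rewrite <- Rinv_1. apply Rinv_le_contravar; lra. }
  unfold Rdiv. fold u.
  assert (HNu : 1 <= N * u) by nra.
  assert (H4 : 1 <= (N*u)^4) by (apply pow_R1_Rle; lra).
  assert (H4' : 1 <= N^4) by (apply pow_R1_Rle; lra).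
  assert (Hu4 : 1 <= u^4) by (apply pow_R1_Rle; lra).
  split; [lra|]. split.
  - replace ((N*u)^5) with (N * ((N*u)^4 * u)) by ring.
    assert (1 <= (N*u)^4 * u) by nra. nra.
  - replace ((N*u)^5) with (N^4 * u * (N * u^4)) by ring.
    assert (1 <= N*u^4) by nra. assert (0 <= N^4*u) by nra. nra.
Qed.

Lemma div_bound X c N Lam L : X <= c * N^4 -> 0 <= c -> 0 < Lam -> N^4/Lam <= L ->
  X / Lam <= c * L.
Proof.
  intros. apply Rle_trans with (c * N^4 / Lam).
  - unfold Rdiv. apply Rmult_le_compat_r; [left; apply Rinv_0_lt_compat; lra | lra].
  - unfold Rdiv in *. rewrite Rmult_assoc. apply Rmult_le_compat_l; lra.
Qed.

Lemma det_form a s1 s2 c1 c2 : a <> 0 -> s1*c2 - c1*s2 <> 0 ->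
  minvertible ((a*s1, a*s2), ((a*a)*a*c1, (a*a)*a*c2)).
Proof.
  intros Ha Hd. unfold minvertible, mdet; simpl. intro E. apply Hd.
  apply (Rmult_eq_reg_l (a*a*a*a)). rewrite Rmult_0_r, <- E. ring.
  repeat apply Rmult_integral_contrapositive_currified; auto.
Qed.

Lemma final_ineq (m1 m2 : pt -> R) K C :
  (forall xi, m2 xi <= K * m1 xi) -> (forall xi, m1 xi <= K * m2 xi) ->
  (forall xi, 0 <= m1 xi) -> (forall xi, 0 <= m2 xi) -> K <= C -> 0 < C ->
  forall xi, / C * m1 xi <= m2 xi /\ m2 xi <= C * m1 xi.
Proof.
  intros H1 H2 P1 P2 HK HC xi. specialize (H1 xi); specialize (H2 xi);
  specialize (P1 xi); specialize (P2 xi). split.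
  - apply (Rmult_le_reg_l C); auto. rewrite <- Rmult_assoc, Rinv_r by lra. nra.
  - nra.
Qed.

Theorem lemmaA3 :
  exists K1 q1 K2 q2 : R, 1 <= K1 /\ 1 <= q1 /\ 1 <= K2 /\ 1 <= q2 /\
  forall (sigma b : pt -> pt) (x : pt) (N Lam : R),
    C3 sigma -> C3 b ->
    0 < Lam <= 1 -> 1 <= N ->
    (forall y : pt, vdist y x < 1 ->
        min_eig_ge (Amat sigma b y) Lam /\ nfun sigma b y <= N) ->
    (exists kappa : pt -> R,
        forall y : pt, vdist y x < 1 ->
          ex_filterdiff kappa (locally y) /\
          dirder sigma sigma y = vscal (kappa y) (sigma y) /\
          Rabs (kappa y) <= nfun sigma b y /\
          vnorm (grad kappa y) <= nfun sigma b y) ->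
    let C := K1 * Rpower (N / Lam) q1 in
    let dstar := / (K2 * Rpower (N / Lam) q2) in
    forall delta : R, 0 < delta <= dstar ->
    let xhat := vadd x (vscal delta (b x)) in
    minvertible (Adelta sigma b delta x) /\
    minvertible (Abar sigma b delta x) /\
    minvertible (Adelta sigma b delta xhat) /\
    forall xi : pt,
      / C * mnorm (Adelta sigma b delta x) xi <= mnorm (Abar sigma b delta x) xi /\
      mnorm (Abar sigma b delta x) xi <= C * mnorm (Adelta sigma b delta x) xi /\
      / C * mnorm (Adelta sigma b delta x) xi <= mnorm (Adelta sigma b delta xhat) xi /\
      mnorm (Adelta sigma b delta xhat) xi <= C * mnorm (Adelta sigma b delta x) xi.
Proof.
  exists 200, 5, 64, 5. split; [lra|]. split; [lra|]. split; [lra|]. split; [lra|].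
  intros sigma b x N Lam Hsig Hb HLam HN Hball _ C dstar delta Hdelta xhat.
  destruct (Lfacts N Lam HN HLam) as (HL1 & HL2 & HL3).
  set (L := N/Lam) in *.
  assert (HL5 : 1 <= L^5) by (apply pow_R1_Rle; lra).
  assert (HC : C = 200 * L^5).
  { unfold C. fold L. replace 5 with (INR 5) by (simpl; ring).
    rewrite Rpower_pow by lra. reflexivity. }
  assert (Hdm : delta * (64 * L^5) <= 1).
  { destruct Hdelta as [Hd0 Hd1]. unfold dstar in Hd1. fold L in Hd1.
    replace 5 with (INR 5) in Hd1 by (simpl; ring).
    rewrite Rpower_pow in Hd1 by lra.
    apply (Rmult_le_compat_r (64 * L^5)) in Hd1; [|lra].
    rewrite Rinv_l in Hd1 by lra. exact Hd1. }
  destruct Hdelta as [Hd0 _].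
  assert (Hd1 : delta <= 1) by nra.
  assert (HdN : delta * N <= 1/64) by nra.
  assert (HdN4 : delta * (N^4/Lam) <= 1/64) by nra.
  assert (HdN4' : delta * (N*N*N*N) <= Lam/64).
  { unfold Rdiv in HdN4. replace (N^4) with (N*N*N*N) in HdN4 by ring.
    apply (Rmult_le_compat_r Lam) in HdN4; [|lra].
    replace (delta * (N * N * N * N * / Lam) * Lam) with (delta * (N*N*N*N)) in HdN4
      by (field; lra). lra. }
  set (a := sqrt delta).
  assert (Ha : 0 < a) by (apply sqrt_lt_R0; lra).
  assert (Hda : delta = a * a) by (unfold a; rewrite sqrt_sqrt; lra).
  destruct x as [x1 x2].
  assert (Hx : vdist (x1, x2) (x1, x2) < 1).
  { unfold vdist, vnorm; cbn [fst snd]. replace ((x1 - x1) ^ 2 + (x2 - x2) ^ 2) with 0 by ring.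
    rewrite sqrt_0; lra. }
  destruct (Hball _ Hx) as [Heig Hnx].
  pose proof (det_lower _ _ (proj1 HLam) Heig) as Hdetx. unfold Amat, mdet in Hdetx; cbn [fst snd] in Hdetx.
  destruct (comp_bounds _ _ _ _ Hnx) as (Bs1&Bs2&Bb1&Bb2&_).
  destruct (bracket_bounds _ _ _ _ Hnx) as (Bc1&Bc2&Bv1&Bv2).
  set (s1 := fst (sigma (x1, x2))) in *. set (s2 := snd (sigma (x1, x2))) in *.
  set (c1 := fst (bracket b sigma (x1,x2))) in *. set (c2 := snd (bracket b sigma (x1,x2))) in *.
  set (v1 := fst (dirder b sigma (x1,x2))) in *. set (v2 := snd (dirder b sigma (x1,x2))) in *.
  set (h1 := delta * fst (b (x1,x2))). set (h2 := delta * snd (b (x1,x2))).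
  assert (Hh : Rabs h1 + Rabs h2 <= 2 * delta * N).
  { unfold h1, h2. rewrite !Rabs_mult, (Rabs_right delta) by lra. nra. }
  assert (Hnear : forall p : pt, Rabs (fst p - x1) + Rabs (snd p - x2) <= Rabs h1 + Rabs h2 ->
            nfun sigma b p <= N /\ min_eig_ge (Amat sigma b p) Lam).
  { intros [p1 p2] Hp. simpl in Hp.
    assert (vdist (p1,p2) (x1,x2) < 1).
    { unfold vdist; simpl. eapply Rle_lt_trans. apply vnorm_le_abs. nra. }
    destruct (Hball _ H); auto. }
  change xhat with (x1 + h1, x2 + h2).
  destruct (Hnear (x1+h1, x2+h2)) as [Hnh Heigh].
  { simpl. replace (x1 + h1 - x1) with h1 by ring. replace (x2 + h2 - x2) with h2 by ring. lra. }
  pose proof (det_lower _ _ (proj1 HLam) Heigh) as Hdeth. unfold Amat, mdet in Hdeth; cbn [fst snd] in Hdeth.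
  destruct (comp_bounds _ _ _ _ Hnh) as (Bt1&Bt2&_).
  destruct (bracket_bounds _ _ _ _ Hnh) as (Be1&Be2&_).
  set (t1 := fst (sigma (x1+h1, x2+h2))) in *. set (t2 := snd (sigma (x1+h1, x2+h2))) in *.
  set (e1 := fst (bracket b sigma (x1+h1, x2+h2))) in *.
  set (e2 := snd (bracket b sigma (x1+h1, x2+h2))) in *.
  destruct Hsig as [Hs1 Hs2].
  assert (Dst1 : Rabs (t1 - s1) <= N * (Rabs h1 + Rabs h2)).
  { apply (mvt2 (fun p => fst (sigma p))).
    - intros p. exact (proj1 Hs1 nil (Nat.le_0_l 2) p).
    - intros p Hp. destruct (Hnear p Hp) as [Hn _].
      destruct (comp_bounds _ _ _ _ Hn) as (_&_&_&_&B5&B6&B7&B8&_). auto. }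
  assert (Dst2 : Rabs (t2 - s2) <= N * (Rabs h1 + Rabs h2)).
  { apply (mvt2 (fun p => snd (sigma p))).
    - intros p. exact (proj1 Hs2 nil (Nat.le_0_l 2) p).
    - intros p Hp. destruct (Hnear p Hp) as [Hn _].
      destruct (comp_bounds _ _ _ _ Hn) as (_&_&_&_&B5&B6&B7&B8&_). auto. }
  assert (Ha0 : a <> 0) by lra.
  assert (EA : Adelta sigma b delta (x1,x2) = ((a*s1, a*s2), ((a*a)*a*c1, (a*a)*a*c2))).
  { unfold Adelta, vscal. rewrite <- Hda. reflexivity. }
  assert (EB : Abar sigma b delta (x1,x2) =
     ((a*(s1 + a*a*v1), a*(s2 + a*a*v2)), ((a*a)*a*c1, (a*a)*a*c2))).
  { unfold Abar, vscal, vadd. rewrite <- Hda. reflexivity. }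
  assert (EH : Adelta sigma b delta (x1+h1,x2+h2) = ((a*t1, a*t2), ((a*a)*a*e1, (a*a)*a*e2))).
  { unfold Adelta, vscal. rewrite <- Hda. reflexivity. }
  rewrite EA, EB, EH, HC.
  assert (HN2 : N <= N*N) by nra.
  assert (HN34 : N*N*N <= N^4) by (replace (N^4) with (N*N*N*N) by ring; nra).
  assert (Hdetb : Lam/2 <= Rabs ((s1 + a*a*v1)*c2 - c1*(s2 + a*a*v2))).
  { replace ((s1 + a*a*v1)*c2 - c1*(s2 + a*a*v2)) with
      ((s1*c2 - c1*s2) + a*a*(v1*c2 - c1*v2)) by ring.
    assert (Hv : Rabs (v1*c2 - c1*v2) <= 2*(N*N) * (2*(2*(N*N))) + 2*(2*(N*N)) * (2*(N*N)))
      by (apply abs_det2; auto).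
    assert (Hv' : Rabs (a*a*(v1*c2 - c1*v2)) <= Lam/4).
    { rewrite Rabs_mult, (Rabs_right (a*a)) by nra. rewrite <- Hda.
      assert (0 <= Rabs (v1*c2 - c1*v2)) by apply Rabs_pos. nra. }
    pose proof (Rabs_triang ((s1*c2 - c1*s2) + a*a*(v1*c2 - c1*v2)) (- (a*a*(v1*c2 - c1*v2)))).
    rewrite Rabs_Ropp in H.
    replace ((s1*c2 - c1*s2) + a*a*(v1*c2 - c1*v2) + - (a*a*(v1*c2 - c1*v2))) with
      (s1*c2 - c1*s2) in H by ring.
    lra. }
  assert (Haa : a*a <= 1) by lra.
  assert (HRr1 : Rabs (s1 - t1) <= 2*(N*N) * (a*a)).
  { rewrite Rabs_minus_sym, <- Hda. nra. }
  assert (HRr2 : Rabs (s2 - t2) <= 2*(N*N) * (a*a)).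
  { rewrite Rabs_minus_sym, <- Hda. nra. }
  assert (HRr1' : Rabs (t1 - s1) <= 2*(N*N) * (a*a)) by (rewrite Rabs_minus_sym; auto).
  assert (HRr2' : Rabs (t2 - s2) <= 2*(N*N) * (a*a)) by (rewrite Rabs_minus_sym; auto).
  assert (Hw1 : Rabs (s1 - (s1 + a*a*v1)) <= 2*(N*N) * (a*a)).
  { replace (s1 - (s1 + a*a*v1)) with (- (a*a*v1)) by ring. rewrite Rabs_Ropp, Rabs_mult, (Rabs_right (a*a)) by nra. nra. }
  assert (Hw2 : Rabs (s2 - (s2 + a*a*v2)) <= 2*(N*N) * (a*a)).
  { replace (s2 - (s2 + a*a*v2)) with (- (a*a*v2)) by ring. rewrite Rabs_Ropp, Rabs_mult, (Rabs_right (a*a)) by nra. nra. }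
  assert (Hw1' : Rabs ((s1 + a*a*v1) - s1) <= 2*(N*N) * (a*a)) by (rewrite Rabs_minus_sym; auto).
  assert (Hw2' : Rabs ((s2 + a*a*v2) - s2) <= 2*(N*N) * (a*a)) by (rewrite Rabs_minus_sym; auto).
  assert (Hu1 : Rabs (s1 + a*a*v1) <= 3*(N*N)).
  { eapply Rle_trans. apply Rabs_triang. rewrite Rabs_mult, (Rabs_right (a*a)) by nra. nra. }
  assert (Hu2 : Rabs (s2 + a*a*v2) <= 3*(N*N)).
  { eapply Rle_trans. apply Rabs_triang. rewrite Rabs_mult, (Rabs_right (a*a)) by nra. nra. }
  assert (Hs1' : Rabs s1 <= 3*(N*N)) by lra.
  assert (Hs2' : Rabs s2 <= 3*(N*N)) by lra.
  assert (HK1 : (4*N*(2*(2*(N*N))) + 2*N*(2*(N*N)) + 2*(2*(2*(N*N)))*(2*(2*(N*N))))/Lam <= 200 * L^5).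
  { apply div_bound with N; try lra.
    replace (N^4) with (N*N*N*N) in * by ring. nra. }
  assert (HK2 : (4*(3*(N*N))*(2*(2*(N*N))) + 2*(3*(N*N))*(2*(N*N)) + 2*(2*(2*(N*N)))*(2*(2*(N*N))))/(Lam/2) <= 200 * L^5).
  { match goal with |- ?X / (Lam/2) <= _ => replace (X / (Lam/2)) with ((X*2)/Lam) by (field; lra) end.
    apply div_bound with N; try lra.
    replace (N^4) with (N*N*N*N) in * by ring. nra. }
  assert (HC0 : 0 < 200 * L^5) by lra.
  assert (Hdetx0 : s1*c2 - c1*s2 <> 0) by (intro E; rewrite E, Rabs_R0 in Hdetx; lra).
  split; [apply det_form; auto|].
  split; [apply det_form; auto; intro E; rewrite E, Rabs_R0 in Hdetb; lra|].
  split; [apply det_form; auto; intro E; rewrite E, Rabs_R0 in Hdeth; lra|].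
  intros xi.
  assert (HLam2 : 0 < Lam/2) by lra.
  destruct (final_ineq (mnorm ((a*s1, a*s2), ((a*a)*a*c1, (a*a)*a*c2)))
     (mnorm ((a*(s1 + a*a*v1), a*(s2 + a*a*v2)), ((a*a)*a*c1, (a*a)*a*c2))) _ _
     (gen_dir a (3*(N*N)) (2*(2*(N*N))) (2*(N*N)) (Lam/2) s1 s2 c1 c2 (s1 + a*a*v1) (s2 + a*a*v2) c1 c2
        Ha Haa HLam2 Hs1' Hs2' Hu1 Hu2 Bc1 Bc2 Bc1 Bc2 Hw1 Hw2 ltac:(lra) Hdetb)
     (gen_dir a (3*(N*N)) (2*(2*(N*N))) (2*(N*N)) (Lam/2) (s1 + a*a*v1) (s2 + a*a*v2) c1 c2 s1 s2 c1 c2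
        Ha Haa HLam2 Hu1 Hu2 Hs1' Hs2' Bc1 Bc2 Bc1 Bc2 Hw1' Hw2' Hdetb ltac:(lra))
     (fun _ => vnorm_ge0 _) (fun _ => vnorm_ge0 _) HK2 HC0 xi) as [G1 G2].
  destruct (final_ineq (mnorm ((a*s1, a*s2), ((a*a)*a*c1, (a*a)*a*c2)))
     (mnorm ((a*t1, a*t2), ((a*a)*a*e1, (a*a)*a*e2))) _ _
     (gen_dir a N (2*(2*(N*N))) (2*(N*N)) Lam s1 s2 c1 c2 t1 t2 e1 e2
        Ha Haa (proj1 HLam) Bs1 Bs2 Bt1 Bt2 Bc1 Bc2 Be1 Be2 HRr1 HRr2 Hdetx Hdeth)
     (gen_dir a N (2*(2*(N*N))) (2*(N*N)) Lam t1 t2 e1 e2 s1 s2 c1 c2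
        Ha Haa (proj1 HLam) Bt1 Bt2 Bs1 Bs2 Be1 Be2 Bc1 Bc2 HRr1' HRr2' Hdeth Hdetx)
     (fun _ => vnorm_ge0 _) (fun _ => vnorm_ge0 _) HK1 HC0 xi) as [G3 G4].
  auto.
Qed.
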